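(* Let $(X,\mu)$ be a measure space, $\mathcal H=L^2(X,\mu)$ the real Hilbert space with inner product $\langle\cdot,\cdot\rangle$, and $\hat H\colon \operatorname{dom}(\hat H)\subset\mathcal H\to\mathcal H$ a densely defined self-adjoint linear operator. Let $\theta\mapsto\psi_\theta\in\operatorname{dom}(\hat H)\setminus\{0\}$, $\theta\in\mathbb R^P$, be a sufficiently regular family of real-valued wavefunctions with $\psi_\theta(x)\neq 0$ for $\mu$-a.e. $x$ (regular enough that all expressions below are well defined, $\partial_{\theta_j}\psi_\theta\in\operatorname{dom}(\hat H)$ with $\hat H\partial_{\theta_j}\psi_\theta=\partial_{\theta_j}(\hat H\psi_\theta)$, and differentiation under the integral sign is permitted). Set $\hat\psi_\theta=\psi_\theta/\|\psi_\theta\|$ and define \[ H(\theta)_{ij}=\langle \partial_{\theta_i}\hat\psi_\theta,\hat H\,\partial_{\theta_j}\hat\psi_\theta\rangle,\qquad i,j=1,\dots,P. \] Let $p_\theta=\psi_\theta^2/\|\psi_\theta\|^2$ be the Born density and write $\langle f\rangle=\int_X f\,p_\theta\,d\mu$. Let $E_L=\hat H\psi_\theta/\psi_\theta$ be the local energy and $E_{L,j}=\partial_{\theta_j}E_L$. Then for all $i,j$, \[ H(\theta)_{ij}=\Big\langle \Big[E_{L,j}+E_L\big(\partial_{\theta_j}\log|\psi_\theta|-\langle\partial_{\theta_j}\log|\psi_\theta|\rangle\big)\Big]\cdot\Big[\partial_{\theta_i}\log|\psi_\theta|-\langle\partial_{\theta_i}\log|\psi_\theta|\rangle\Big]\Big\rangle.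 \]
   Context: All wavefunctions are real. $\|\cdot\|$ is the norm induced by $\langle\cdot,\cdot\rangle$. *)

(* Defs.v *)
From HB Require Import structures.
From mathcomp Require Import all_boot all_order all_algebra.
From mathcomp Require Import all_classical all_reals all_analysis.
Set Implicit Arguments. Unset Strict Implicit. Unset Printing Implicit Defensive.
Import Order.TTheory GRing.Theory Num.Theory.
Import numFieldNormedType.Exports.
Local Open Scope classical_set_scope.
Local Open Scope ring_scope.

Section Defs.
Context {d : measure_display} {X : measurableType d} {R : realType}.
Variable mu : {measure set X -> \bar R}.

Definition L2 (f : X -> R) : Prop :=
  measurable_fun setT f /\ mu.-integrable setT (fun x => (f x ^+ 2)%:E).

Definition ip (f g : X -> R) : R := Rintegral mu setT (fun x => f x * g x).
Definition nrm (f : X -> R) : R := Num.sqrt (ip f f).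

(* a linear operator on L^2 with domain dom, acting on representatives and
   well defined on a.e.-classes *)
Definition linear_operator (dom : set (X -> R)) (Hop : (X -> R) -> (X -> R)) : Prop :=
  dom `<=` L2 /\
      (forall f, dom f -> L2 (Hop f)) /\
      (forall f g, dom f -> L2 g -> {ae mu, forall x, f x = g x} ->
          dom g /\ {ae mu, forall x, Hop f x = Hop g x}) /\
      dom (fun _ => 0) /\
      (forall (a : R) f g, dom f -> dom g -> dom (fun x => a * f x + g x)) /\
      (forall (a : R) f g, dom f -> dom g ->
          {ae mu, forall x, Hop (fun y => a * f y + g y) x = a * Hop f x + Hop g x}).

Definition densely_defined (dom : set (X -> R)) : Prop :=
  forall g, L2 g -> forall e : R, 0 < e ->
    exists f, dom f /\ nrm (fun x => f x - g x) < e.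

(* H = H^* : H symmetric and dom(H^* ) included in dom(H) *)
Definition self_adjoint (dom : set (X -> R)) (Hop : (X -> R) -> (X -> R)) : Prop :=
  (forall f g, dom f -> dom g -> ip (Hop f) g = ip f (Hop g)) /\
  (forall g h, L2 g -> L2 h -> (forall f, dom f -> ip (Hop f) g = ip f h) -> dom g).

Definition born_mean (psi : X -> R) (f : X -> R) : R :=
  Rintegral mu setT (fun x => f x * (psi x ^+ 2 / nrm psi ^+ 2)).

End Defs.

Definition pd {R : realType} {P : nat} (j : 'I_P) (F : 'rV[R]_P -> R)
  (th : 'rV[R]_P) : R := 'D_(delta_mx 0 j) F th.

Definition local_energy {X : Type} {R : realType} {P : nat}
  (Hop : (X -> R) -> (X -> R)) (psi : 'rV[R]_P -> X -> R) (th : 'rV[R]_P) (x : X) : R :=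
  Hop (psi th) x / psi th x.

(* Main.v *)
Require Import Defs.
From HB Require Import structures.
From mathcomp Require Import all_boot all_order all_algebra.
From mathcomp Require Import all_classical all_reals all_analysis.
From mathcomp Require Import measurable_realfun ring lra.
Import Order.TTheory GRing.Theory Num.Theory.
Import numFieldNormedType.Exports.
Local Open Scope classical_set_scope.
Local Open Scope ring_scope.

Lemma minv (R : realType) : measurable_fun setT (@GRing.inv R).
Proof.
have -> : [set: R] = [set x | x != 0] `|` [set 0].
  apply/seteqP; split => x //= _; case: (eqVneq x 0) => [->|]; by [right|left].
apply/measurable_funU => //; first by apply: measurable_realfun.open_measurable; exact: open_neq.
split; last exact: measurable_fun_set1.
apply: measurable_realfun.open_continuous_measurable_fun; first exact: open_neq.
move=> x; rewrite inE /= => x0.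
exact: inv_continuous.
Qed.

Lemma measurable_funV' d (X : measurableType d) (R : realType) (f : X -> R) :
  measurable_fun setT f -> measurable_fun setT (fun x => (f x)^-1).
Proof. move=> mf; exact: (measurableT_comp (minv R) mf). Qed.

Section S.
Context d (X : measurableType d) (R : realType) (mu : {measure set X -> \bar R}).
Lemma Rint_ae (f g : X -> R) : measurable_fun setT f -> measurable_fun setT g ->
  {ae mu, forall x, f x = g x} -> Rintegral mu setT f = Rintegral mu setT g.
Proof.
move=> mf mg fg; rewrite /Rintegral; congr fine.
apply: ae_eq_integral => //.
- exact/measurable_EFinP.
- exact/measurable_EFinP.
- by apply: filterS fg => x /= ->.
Qed.
End S.

Lemma chain (R : realType) (V : normedModType R) (F : V -> R) (g : R -> R) a v :
  derivable F a v -> derivable g (F a) 1 ->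
  derivable (g \o F) a v /\ 'D_v (g \o F) a = 'D_1 g (F a) * 'D_v F a.
Proof.
move=> dF dg.
pose u h := F (h *: v + a).
have u0 : u 0 = F a by rewrite /u scale0r add0r.
have du : derivable u 0 1 by move/derivable1P: dF.
have dg' : derivable g (u 0) 1 by rewrite u0.
have Du : forall (G : V -> R), 'D_v G a = 'D_1 (fun h : R => G (h *: v + a)) 0.
  move=> G; rewrite /derive; do 2 f_equal; apply: funext => h /=; by rewrite !scale0r !add0r [h%:A]mulr1 addr0.
split.
  apply/derivable1P; rewrite /comp.
  apply/derivable1_diffP; apply: (differentiable_comp (f := u) (g := g)).
    exact/derivable1_diffP.
  exact/derivable1_diffP.
rewrite Du (Du F) -/u -!derive1E.
have -> : (fun h : R => (g \o F) (h *: v + a)) = g \o u by [].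
by rewrite derive1_comp // u0.
Qed.

Lemma d_lnabs (R : realType) (y : R) : y != 0 ->
  derivable (fun z : R => ln `|z|) y 1 /\ 'D_1 (fun z : R => ln `|z|) y = y^-1.
Proof.
move=> y0.
have [yp|yn] := ltP 0 y.
  have E : \near y, ln y = ln `|y|.
    near=> z; rewrite gtr0_norm //; near: z; exact: (cvgr_gt y).
  have D := near_eq_is_derive E (is_derive1_ln yp).
  by case: D.
have yn' : y < 0 by rewrite lt_neqAle y0 yn.
have E : \near y, (@ln R \o -%R) y = ln `|y|.
  near=> z; rewrite /= ltr0_norm //; near: z; exact: (cvgr_lt y).
have D0 : is_derive y 1 (@ln R \o -%R) ((- y)^-1 * (- 1)).
  apply: is_derive1_comp; first by apply: is_derive1_ln; rewrite oppr_gt0.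
have D := near_eq_is_derive E D0.
case: D => dd ->; split => //.
by rewrite invrN mulrN mulNr mulr1 opprK.
Unshelve. all: by end_near.
Qed.

Lemma d_sqrt (R : realType) (y : R) : 0 < y ->
  derivable (@Num.sqrt R) y 1 /\ 'D_1 (@Num.sqrt R) y = (2 * Num.sqrt y)^-1.
Proof.
move=> y0; have D := is_derive1_sqrt y0.
by case: D.
Qed.

Lemma sc (R : realType) (a b : R) : a *: b = a * b. Proof. by []. Qed.


Section Lin.
Context d (X : measurableType d) (R : realType) (mu : {measure set X -> \bar R}).
Variables (dom : set (X -> R)) (Hop : (X -> R) -> (X -> R)).
Hypothesis Hl : linear_operator mu dom Hop.

Lemma Hop0 : {ae mu, forall x, Hop (fun _ => 0) x = 0}.
Proof.
case: Hl => _ [_ [_ [d0 [_ Hc]]]].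
have := Hc (-1) _ _ d0 d0.
have -> : (fun y : X => -1 * 0 + 0) = (fun _ => 0 : R).
  by apply/funext => y; rewrite mulr0 addr0.
apply: filterS => x; lra.
Qed.

Lemma Hop_comb (a b : R) f g : dom f -> dom g ->
  dom (fun x => a * f x + b * g x) /\
  {ae mu, forall x, Hop (fun x => a * f x + b * g x) x = a * Hop f x + b * Hop g x}.
Proof.
case: Hl => _ [_ [_ [d0 [Hd Hc]]]] df dg.
have dg' : dom (fun x => b * g x + 0) by exact: Hd.
have E : (fun x => a * f x + b * g x) = (fun x => a * f x + (fun x => b * g x + 0) x).
  by apply/funext => y; rewrite addr0.
rewrite E; split; first exact: Hd.
have h1 := Hc a _ _ df dg'.
have h2 := Hc b _ _ dg d0.
apply: filterS3 h1 h2 Hop0 => x -> -> ->; lra.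
Qed.
End Lin.
Arguments d_lnabs {R y}.
Arguments d_sqrt {R y}.
Arguments chain {R V F g a v}.
Arguments Rint_ae {d X R mu f g}.
Arguments Hop_comb {d X R mu dom Hop}.

Lemma alg1 (R : realType) (n a b e f ci cj : R) : n != 0 ->
  (n^-1 * a + - (ci / n ^+ 3) * e) * (n^-1 * b + - (cj / n ^+ 3) * f) =
  (b - cj / n ^+ 2 * f) * (a - ci / n ^+ 2 * e) / n ^+ 2.
Proof. by move=> n0; field. Qed.

Lemma alg2 (R : realType) (n ai aj b e f ci cj : R) : n != 0 -> e != 0 ->
  (f * (- (e ^- 2) * aj) + e^-1 * b + f / e * (e^-1 * aj - cj / n ^+ 2)) *
  (e^-1 * ai - ci / n ^+ 2) * (e ^+ 2 / n ^+ 2) =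
  (b - cj / n ^+ 2 * f) * (ai - ci / n ^+ 2 * e) / n ^+ 2.
Proof. by move=> n0 e0; field; rewrite n0 e0. Qed.
Arguments measurable_funV' {d X R f}.

Theorem mainTheorem1 (d : measure_display) (X : measurableType d) (R : realType)
  (mu : {measure set X -> \bar R}) (P : nat)
  (dom : set (X -> R)) (Hop : (X -> R) -> (X -> R))
  (psi : 'rV[R]_P -> X -> R) :
  linear_operator mu dom Hop ->
  densely_defined mu dom ->
  self_adjoint mu dom Hop ->
  (forall th, dom (psi th)) ->
  (forall th, nrm mu (psi th) != 0) ->
  (forall th, {ae mu, forall x, psi th x != 0}) ->
  (forall th (j : 'I_P) x, derivable (fun t => psi t x) th (delta_mx 0 j)) ->
  (forall th (j : 'I_P), dom (fun x => pd j (fun t => psi t x) th)) ->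
  (forall th (j : 'I_P),
     {ae mu, forall x, derivable (fun t => Hop (psi t) x) th (delta_mx 0 j)}) ->
  (forall th (j : 'I_P),
     {ae mu, forall x, Hop (fun y => pd j (fun t => psi t y) th) x
                       = pd j (fun t => Hop (psi t) x) th}) ->
  (forall th (j : 'I_P),
     derivable (fun t => Rintegral mu setT (fun x => psi t x ^+ 2)) th (delta_mx 0 j) /\
     pd j (fun t => Rintegral mu setT (fun x => psi t x ^+ 2)) th
       = Rintegral mu setT (fun x => pd j (fun t => psi t x ^+ 2) th)) ->
  (forall th (j : 'I_P),
     measurable_fun setT (fun x => pd j (fun t => ln `|psi t x|) th) /\
     measurable_fun setT (fun x => pd j (fun t => local_energy Hop psi t x) th)) ->
  forall (th : 'rV[R]_P) (i j : 'I_P),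
    ip mu (fun x => pd i (fun t => psi t x / nrm mu (psi t)) th)
          (Hop (fun x => pd j (fun t => psi t x / nrm mu (psi t)) th))
    = born_mean mu (psi th)
        (fun x =>
           (pd j (fun t => local_energy Hop psi t x) th
            + local_energy Hop psi th x
              * (pd j (fun t => ln `|psi t x|) th
                 - born_mean mu (psi th) (fun y => pd j (fun t => ln `|psi t y|) th)))
           * (pd i (fun t => ln `|psi t x|) th
              - born_mean mu (psi th) (fun y => pd i (fun t => ln `|psi t y|) th))).
Proof.
move=> Hl _ _ Hdom Hn0 Hae Hder Hdomd Haeder Haecomm Hint Hmeas th i j.
have Hl' := Hl.
case: Hl' => [HdomL2 [HopL2 _]].
have mdom : forall f, dom f -> measurable_fun setT f.
  by move=> f /HdomL2 [].
have idom : forall f, dom f -> mu.-integrable setT (fun x => (f x ^+ 2)%:E).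
  by move=> f /HdomL2 [].
pose psi0 := psi th.
pose phi (k : 'I_P) := fun x => pd k (fun t => psi t x) th.
pose n := nrm mu psi0.
pose N := Rintegral mu setT (fun x => psi0 x ^+ 2).
have nE : forall t, nrm mu (psi t) = Num.sqrt (Rintegral mu setT (fun x => psi t x ^+ 2)).
  move=> t; rewrite /nrm /ip; congr Num.sqrt; apply: eq_Rintegral => x _ //.
have N0 : 0 <= N by apply: Rintegral_ge0 => x _; exact: sqr_ge0.
have Npos : 0 < N.
  rewrite lt_neqAle N0 andbT; apply/eqP => N0'.
  by move: (Hn0 th); rewrite nE -/psi0 -/N -N0' sqrtr0 eqxx.
have npos : 0 < n by rewrite /n nE sqrtr_gt0.
have nn0 : n != 0 by rewrite gt_eqF.
have nN : n ^+ 2 = N by rewrite /n nE sqr_sqrtr.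
have iprod : forall f g, dom f -> dom g ->
    mu.-integrable setT (EFin \o (fun x => f x * g x)).
  move=> f g df dg.
  apply: (@le_integrable _ _ _ mu setT measurableT _ (fun x => ((f x ^+ 2)%:E + (g x ^+ 2)%:E)%E)).
  - by apply/measurable_EFinP; apply: measurable_funM; apply: mdom.
  - move=> x _; rewrite lee_fin.
    rewrite [X in _ <= X]ger0_norm; last by rewrite addr_ge0 // sqr_ge0.
    by case: (ler0P (f x * g x)) => h; nra.
  - exact: (integrableD _ (idom _ df) (idom _ dg)).
pose c (k : 'I_P) := Rintegral mu setT (fun x => psi0 x * phi k x).

have Dln : forall k x, psi0 x != 0 ->
    pd k (fun t => ln `|psi t x|) th = (psi0 x)^-1 * phi k x.
  move=> k x px; rewrite /pd.
  have [dl Dl] := d_lnabs px.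
  have [_ ->] := chain (F := fun t => psi t x) (Hder th k x) dl.
  by rewrite Dl.
have c2 : forall k, Rintegral mu setT (fun x => pd k (fun t => psi t x ^+ 2) th) = 2 * c k.
  move=> k; rewrite /c -RintegralZl //; last exact: iprod (Hdom th) (Hdomd th k).
  apply: eq_Rintegral => x _; rewrite /pd.
  have -> : (fun t => psi t x ^+ 2) = (fun t => psi t x) ^+ 2 by apply/funext.
  rewrite deriveX //= sc expr1 /phi /pd; by rewrite mulrA.
have sN : Num.sqrt N = n by rewrite /n nE.
have Dn : forall k, derivable (fun t => nrm mu (psi t)) th (delta_mx 0 k) /\
    pd k (fun t => nrm mu (psi t)) th = c k / n.
  move=> k.
  have -> : (fun t => nrm mu (psi t)) =
      Num.sqrt \o (fun t => Rintegral mu setT (fun x => psi t x ^+ 2)).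
    by apply/funext => t; rewrite nE.
  have [dI pI] := Hint th k.
  have [ds Ds] := d_sqrt Npos.
  have [dc Dc] := chain dI ds.
  split => //; rewrite /pd Dc Ds; rewrite /pd in pI; rewrite pI c2 sN.
  by field.

have Dg : forall k x, pd k (fun t => psi t x / nrm mu (psi t)) th =
    n^-1 * phi k x + (- (c k / n ^+ 3)) * psi0 x.
  move=> k x; rewrite /pd.
  have -> : (fun t => psi t x / nrm mu (psi t)) =
      (fun t => psi t x) * (fun t => (nrm mu (psi t))^-1) by [].
  have [dn Dn'] := Dn k; rewrite /pd in Dn'.
  rewrite deriveM //; last exact: derivableV.
  rewrite deriveV // Dn' !sc -/psi0 -/n /phi /pd.
  by field.
have gE : forall k, (fun x => pd k (fun t => psi t x / nrm mu (psi t)) th) =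
    (fun x => n^-1 * phi k x + (- (c k / n ^+ 3)) * psi0 x).
  by move=> k; apply/funext => x; exact: Dg.
have bm : forall k, born_mean mu (psi th) (fun y => pd k (fun t => ln `|psi t y|) th)
    = c k / n ^+ 2.
  move=> k; rewrite /born_mean -/psi0 -/n.
  transitivity (Rintegral mu setT (fun x => (psi0 x * phi k x) * (n ^+ 2)^-1)).
    apply: Rint_ae.
    - apply: measurable_funM; first exact: (Hmeas th k).1.
      apply: measurable_funM; last exact: measurable_cst.
      by apply: measurable_funX; exact: mdom (Hdom th).
    - apply: measurable_funM; last exact: measurable_cst.
      by apply: measurable_funM; [exact: mdom (Hdom th)|exact: mdom (Hdomd th k)].
    - apply: filterS (Hae th) => x px; rewrite Dln //.
      by field; rewrite px nn0.
  by rewrite RintegralZr //; exact: iprod (Hdom th) (Hdomd th k).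

have mpsi := mdom _ (Hdom th).
have mphi : forall k, measurable_fun setT (phi k) by move=> k; exact: mdom (Hdomd th k).
have mhp : measurable_fun setT (Hop psi0) by case: (HopL2 _ (Hdom th)).
have mhphi : measurable_fun setT (Hop (phi j)) by case: (HopL2 _ (Hdomd th j)).
rewrite !bm /ip.
have [domg Hg] := Hop_comb Hl (n^-1) (- (c j / n ^+ 3)) _ _ (Hdomd th j) (Hdom th).
have Hg' : {ae mu, forall x, Hop (fun x => pd j (fun t => psi t x / nrm mu (psi t)) th) x
   = n^-1 * Hop (phi j) x + (- (c j / n ^+ 3)) * Hop psi0 x}.
  Time rewrite (gE j); exact: Hg.
have mHg : measurable_fun setT
    (Hop (fun x => pd j (fun t => psi t x / nrm mu (psi t)) th)).
  Time rewrite (gE j); by case: (HopL2 _ domg).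
have mgi : measurable_fun setT (fun x => pd i (fun t => psi t x / nrm mu (psi t)) th).
  Time rewrite (gE i); apply: measurable_funD;
      apply: measurable_funM => //; exact: measurable_cst.
pose T x := (Hop (phi j) x - c j / n ^+ 2 * Hop psi0 x) *
            (phi i x - c i / n ^+ 2 * psi0 x) / n ^+ 2.
have mT : measurable_fun setT T.
  rewrite /T; apply: measurable_funM; last exact: measurable_cst.
  apply: measurable_funM; apply: measurable_funB => //;
    apply: measurable_funM => //; exact: measurable_cst.
transitivity (Rintegral mu setT T).
  apply: Rint_ae.
  - Time exact: measurable_funM mgi mHg.
  - exact: mT.
  - apply: filterS Hg' => x /= ->; rewrite Dg /T.
    exact: alg1.
symmetry; apply: Rint_ae.
- apply: measurable_funM; last first.
    apply: measurable_funM; [exact: measurable_funX mpsi | exact: measurable_cst].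
  apply: measurable_funM; last first.
    apply: measurable_funB; [exact: (Hmeas th i).1 | exact: measurable_cst].
  apply: measurable_funD; first exact: (Hmeas th j).2.
  apply: measurable_funM; last first.
    apply: measurable_funB; [exact: (Hmeas th j).1 | exact: measurable_cst].
  rewrite /local_energy; exact: measurable_funM mhp (measurable_funV' mpsi).
- exact: mT.
- apply: filterS3 (Hae th) (Haeder th j) (Haecomm th j) => x px dh hc.
  have DLE : pd j (fun t => local_energy Hop psi t x) th =
      Hop psi0 x * (- (psi0 x ^- 2) * phi j x) + (psi0 x)^-1 * Hop (phi j) x.
    rewrite hc /pd /local_energy.
    have -> : (fun t => Hop (psi t) x / psi t x) =
        (fun t => Hop (psi t) x) * (fun t => (psi t x)^-1) by [].
    rewrite deriveM //; last exact: derivableV.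
    by rewrite deriveV // !sc -/psi0 /phi /pd mulrC.
  rewrite /= DLE !Dln // /local_energy -/psi0 -/n /T.
  exact: alg2.
Qed.
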